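(* Let $v_1,\dots,v_n$ be vectors in an $l$-dimensional vector space over $\mathrm{GF}(2)$. Suppose that for every subset $C\subseteq\{1,\dots,n\}$ with $|C|\equiv 2 \pmod 4$ we have $\sum_{i\in C} v_i \neq \mathbf{0}$. Then $l \geq \sqrt{n}-2$. *)

(* Defs.v *)
From mathcomp Require Import all_boot all_order all_algebra.

(* Main.v *)
Require Import Defs.
From mathcomp Require Import all_boot all_order all_algebra.
From mathcomp Require Import zify.
Import GRing.Theory Num.Theory.

Section All.
Local Open Scope ring_scope.

Lemma F2_cases (a : 'F_2) : a = 0 \/ a = 1.
Proof.
case: a => [[|[|k]] Hk]; [left|right|]; try by apply: val_inj.
by [].
Qed.

Definition cnt {n} (x : 'rV['F_2]_n) : nat := (\sum_i ((x ord0 i != 0%R) : nat))%N.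

Lemma card_cnt n (x : 'rV['F_2]_n) : #|[set i | x 0 i != 0]| = cnt x.
Proof.
rewrite /cnt -sum1_card big_mkcond /=; apply: eq_bigr => i _.
by rewrite inE; case: (x 0 i != 0).
Qed.

Lemma sum_scale n l (v : 'I_n -> 'rV['F_2]_l) (x : 'rV['F_2]_n) :
  \sum_i x 0 i *: v i = \sum_(i in [set i | x 0 i != 0]) v i.
Proof.
rewrite [RHS]big_mkcond /=; apply: eq_bigr => i _; rewrite inE.
by case: (F2_cases (x 0 i)) => ->; rewrite ?scale0r ?scale1r ?eqxx ?oner_eq0.
Qed.

Lemma sum_F2 n (x : 'rV['F_2]_n) : \sum_i x 0 i = (cnt x)%:R.
Proof.
rewrite /cnt natr_sum; apply: eq_bigr => i _.
by case: (F2_cases (x 0 i)) => ->; rewrite ?eqxx ?oner_eq0.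
Qed.

Lemma natF2 m : ((m%:R : 'F_2) = 0) -> (m %% 2 = 0)%N.
Proof. by move=> H; have := @val_Fp_nat 2 isT m; rewrite H. Qed.

Lemma natF2' m : (m %% 2 = 0)%N -> ((m%:R : 'F_2) = 0).
Proof. by move=> H; rewrite -Fp_nat_mod // H. Qed.

Definition dot {n} (x y : 'rV['F_2]_n) : nat :=
  (\sum_i (((x ord0 i != 0%R) && (y ord0 i != 0%R)) : nat))%N.

Lemma dotE n (x y : 'rV['F_2]_n) : \sum_i x 0 i * y 0 i = (dot x y)%:R.
Proof.
rewrite /dot natr_sum; apply: eq_bigr => i _.
by case: (F2_cases (x 0 i)) => ->; case: (F2_cases (y 0 i)) => ->;
  rewrite ?eqxx ?oner_eq0 ?mulr0 ?mul0r ?mulr1.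
Qed.

Lemma cnt_add n (x y : 'rV['F_2]_n) : (cnt (x + y) + 2 * dot x y = cnt x + cnt y)%N.
Proof.
rewrite /cnt /dot big_distrr -!big_split /=; apply: eq_bigr => i _.
rewrite mxE.
by case: (F2_cases (x 0 i)) => ->; case: (F2_cases (y 0 i)) => ->.
Qed.

Section Main.
Variables (n l : nat) (v : 'I_n -> 'rV['F_2]_l).
Hypothesis H : forall C : {set 'I_n}, (#|C| %% 4)%N = 2%N -> (\sum_(i in C) v i != 0)%R.

Let A : 'M['F_2]_(n, l) := \matrix_i v i.
Let B : 'M['F_2]_(n, 1) := const_mx 1.
Let W := row_mx A B.

Lemma kerW (x : 'rV_n) : x *m W = 0 ->
  \sum_i x 0 i *: v i = 0 /\ \sum_i x 0 i = 0.
Proof.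
rewrite /W mul_mx_row => /eqP; rewrite row_mx_eq0 => /andP[/eqP h1 /eqP h2].
split.
  rewrite -[RHS]h1 mulmx_sum_row; apply: eq_bigr => i _; by rewrite rowK.
have := congr1 (fun M : 'M_1 => M 0 0) h2; rewrite !mxE => e; rewrite -[RHS]e.
by apply: eq_bigr => i _; rewrite /B !mxE mulr1.
Qed.

Lemma cnt_ker (x : 'rV_n) : x *m W = 0 -> (cnt x %% 4 = 0)%N.
Proof.
move=> /kerW [h1 h2].
have e2 : (cnt x %% 2 = 0)%N by apply: natF2; rewrite -sum_F2.
case: (boolP (cnt x %% 4 == 2)%N) => [/eqP h4|h4].
  by have := H [set i | x 0 i != 0]; rewrite card_cnt -sum_scale h1 eqxx => /(_ h4).
move/negP: h4 => h4; apply/eqP; apply/negP => h5.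
have : (cnt x %% 4 = 2)%N by lia.
by move/eqP.
Qed.

Lemma ortho (x y : 'rV_n) : x *m W = 0 -> y *m W = 0 ->
  \sum_i x 0 i * y 0 i = 0.
Proof.
move=> hx hy.
have hxy : (x + y) *m W = 0 by rewrite mulmxDl hx hy addr0.
have := cnt_ker _ hx; have := cnt_ker _ hy; have := cnt_ker _ hxy.
have := @cnt_add _ x y => e a b c.
rewrite dotE; apply: natF2'; move: e a b c; move: (cnt (x + y)) (dot x y) (cnt x) (cnt y) => p q r s; lia.
Qed.

Lemma bound : (n <= 2 * l + 2)%N.
Proof.
set K := kermx W.
have KK : K *m K^T = 0.
  apply/matrixP => i j; rewrite !mxE.
  have hi : row i K *m W = 0 by apply/sub_kermxP; apply: row_sub.
  have hj : row j K *m W = 0 by apply/sub_kermxP; apply: row_sub.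
  rewrite -[RHS](ortho _ _ hi hj); apply: eq_bigr => k _; by rewrite !mxE.
have := mxrank_mul_min K K^T; rewrite KK mxrank0 mxrank_tr.
rewrite /K mxrank_ker.
have := rank_leq_col W.
lia.
Qed.

End Main.
End All.

Theorem lemma4 (R : rcfType) (n l : nat) (v : 'I_n -> 'rV['F_2]_l) :
  (forall C : {set 'I_n}, #|C| %% 4 = 2 -> (\sum_(i in C) v i != 0)%R) ->
  (Num.sqrt (n%:R : R) - 2 <= l%:R)%R.
Proof.
move=> H.
have hb := @bound _ _ _ H.
have hn : (n <= (l + 2) ^ 2)%N by nia.
rewrite lerBlDr.
have -> : (l%:R + 2 : R)%R = ((l + 2)%:R)%R by rewrite natrD.
rewrite -[X in (_ <= X)%R]ger0_norm ?ler0n // -sqrtr_sqr ler_sqrt ?exprn_ge0 ?ler0n //.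
by rewrite -natrX ler_nat.
Qed.
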